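(* Let $M$ be a modular lattice of finite length and $n\ge 1$. The following are equivalent: (i) $M$ has breadth at most $n$; (ii) no complemented modular lattice of length $n+1$ (i.e. no subspace lattice of a possibly reducible projective geometry of dimension $n$) embeds into $M$ as a sublattice; (iii) for every $x\in S(M)$, the interval $[x,x^*]$ has length at most $n$ (i.e. is the subspace lattice of a possibly reducible projective geometry of dimension at most $n-1$).
   Context: $M$ has least element $0$ and greatest element $1$. For $a\in M$: $a^*$ is the join of all elements covering $a$ if $a<1$, and $1^*=1$. An interval $[a,b]$ is \emph{atomistic} if every element of it is a join of atoms of $[a,b]$. The \emph{skeleton} $S(M)$ is the set of least elements of the maximal (under inclusion) atomistic intervals of $M$. The \emph{breadth} of a lattice $K$ is the supremum of all $m$ for which there is a map $\varphi$ from the Boolean lattice $\mathbf{2}^m$ into $K$ with $\varphi(a)\le\varphi(b)\iff a\le b$. The length of a lattice is the supremum of $|C|-1$ over its chains $C$. *)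

(* Defs.v *)
From mathcomp Require Import all_boot all_order.
Set Implicit Arguments. Unset Strict Implicit. Unset Printing Implicit Defensive.
Import Order.Theory.
Local Open Scope order_scope.

Section LatticeDefs.
Context {d : Order.disp_t}.

Definition modular (T : latticeType d) : Prop :=
  forall a b c : T, a <= c -> a `|` (b `&` c) = (a `|` b) `&` c.

(* every (finite) chain whose elements satisfy P has at most n+1 elements,
   i.e. the chains inside P have length <= n *)
Definition chains_le (T : porderType d) (P : T -> Prop) (n : nat) : Prop :=
  forall s : seq T, sorted <%O s -> (forall x, x \in s -> P x) -> (size s <= n.+1)%N.

Definition length_le (T : porderType d) (n : nat) : Prop :=
  chains_le (fun _ : T => True) n.

Definition finite_length (T : porderType d) : Prop := exists N, length_le T N.

Definition has_length (T : porderType d) (n : nat) : Prop :=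
  length_le T n /\ exists s : seq T, sorted <%O s /\ size s = n.+1.

Definition interval_length_le (T : porderType d) (x y : T) (n : nat) : Prop :=
  chains_le (fun z => x <= z /\ z <= y) n.

Definition covers (T : porderType d) (a b : T) : Prop :=
  a < b /\ forall c, ~ (a < c /\ c < b).

Definition is_lub (T : porderType d) (S : T -> Prop) (s : T) : Prop :=
  (forall x, S x -> x <= s) /\ (forall u, (forall x, S x -> x <= u) -> s <= u).

Definition star_of (T : tbLatticeType d) (a s : T) : Prop :=
  (a = \top -> s = \top) /\ (a <> \top -> is_lub (covers a) s).

Definition atom_of (T : porderType d) (a b c : T) : Prop := covers a c /\ c <= b.

Definition is_join_in (T : porderType d) (a b : T) (S : T -> Prop) (c : T) : Prop :=
  a <= c /\ c <= b /\ (forall x, S x -> x <= c) /\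
  (forall u, a <= u -> u <= b -> (forall x, S x -> x <= u) -> c <= u).

Definition atomistic (T : porderType d) (a b : T) : Prop :=
  forall c, a <= c -> c <= b ->
    exists S : T -> Prop, (forall x, S x -> atom_of a b x) /\ is_join_in a b S c.

Definition max_atomistic (T : porderType d) (a b : T) : Prop :=
  a <= b /\ atomistic a b /\
  forall c e, c <= e -> c <= a -> b <= e -> atomistic c e -> c = a /\ e = b.

Definition skeleton (T : porderType d) (a : T) : Prop := exists b, max_atomistic a b.

Definition breadth_le (T : porderType d) (n : nat) : Prop :=
  forall (m : nat) (phi : {set 'I_m} -> T),
    (forall A B, phi A <= phi B <-> A \subset B) -> (m <= n)%N.

End LatticeDefs.

Definition complemented {d} (L : tbLatticeType d) : Prop :=
  forall x : L, exists y, x `&` y = \bot /\ x `|` y = \top.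

Definition lattice_embedding {d d'} (L : latticeType d') (M : latticeType d) (f : L -> M) : Prop :=
  injective f /\ (forall x y, f (x `&` y) = f x `&` f y) /\ (forall x y, f (x `|` y) = f x `|` f y).

(* Main.v *)
Require Import Defs.
From mathcomp Require Import all_boot all_order.
From Stdlib Require Import Classical ClassicalEpsilon.
From mathcomp Require Import zify.
Set Implicit Arguments. Unset Strict Implicit. Unset Printing Implicit Defensive.
Import Order.Theory.
Local Open Scope order_scope.

Section Gen.
Context {d : Order.disp_t} {T : tbLatticeType d}.
Hypothesis modT : modular T.

Definition J (a : nat -> T) k (P : pred nat) := \join_(i < k | P i) a i.
Definition F (b : T) a k P := b `|` J a k P.
Definition D b a k := F b a k predT.

Lemma J0 a P : J a 0 P = \bot.
Proof. by rewrite /J big_ord0. Qed.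

Lemma JS a k P : J a k.+1 P = J a k P `|` (if P k then a k else \bot).
Proof. by rewrite /J big_mkcond big_ord_recr /= -big_mkcond. Qed.

Lemma F0 b a P : F b a 0 P = b.
Proof. by rewrite /F J0 joinx0. Qed.

Lemma FS b a k P : F b a k.+1 P = F b a k P `|` (if P k then a k else \bot).
Proof. by rewrite /F JS joinA. Qed.

Lemma FST b a k (P : pred nat) : P k -> F b a k.+1 P = F b a k P `|` a k.
Proof. by move=> H; rewrite FS H. Qed.

Lemma FSF b a k (P : pred nat) : ~~ P k -> F b a k.+1 P = F b a k P.
Proof. by move=> H; rewrite FS (negbTE H) joinx0. Qed.

Lemma eq_F b a k (P Q : pred nat) : P =1 Q -> F b a k P = F b a k Q.
Proof. by move=> H; rewrite /F /J; congr (_ `|` _); apply: eq_bigl => i; apply: H. Qed.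

Lemma le_bF b a k P : b <= F b a k P.
Proof. exact: leUl. Qed.

Lemma le_F b a k (P Q : pred nat) : (forall i, P i -> Q i) -> F b a k P <= F b a k Q.
Proof.
move=> H; elim: k => [|k IH]; first by rewrite !F0.
rewrite !FS; case: (boolP (P k)) => Pk.
  by rewrite (H _ Pk) leUx (lexUl _ IH) leUr.
by rewrite joinx0 lexUl.
Qed.

Lemma le_Fmono b a k l P : (k <= l)%N -> F b a k P <= F b a l P.
Proof.
move=> /subnK <-; elim: (l - k)%N => [|j IH]; first by rewrite add0n.
by rewrite addSn FS (le_trans IH) // leUl.
Qed.

Section Chain.
Variables (b : T) (a c : nat -> T) (m : nat).
Hypothesis H1 : b <= c 0.
Hypothesis H2 : forall i, (i < m)%N -> c i <= c i.+1.
Hypothesis H3 : forall i, (i < m)%N -> a i <= c i.+1.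
Hypothesis H4 : forall i, (i < m)%N -> a i `&` c i <= b.
Hypothesis H5 : forall i, (i < m)%N -> ~~ (a i <= c i).

Lemma c_mono i j : (i <= j)%N -> (j <= m)%N -> c i <= c j.
Proof.
move=> /subnK <-; elim: (j - i)%N => [|k IH]; first by rewrite add0n.
move=> Hm; rewrite addSn (le_trans (IH _)) ?H2 //; by apply: ltnW.
Qed.

Lemma F_le_c k P : (k <= m)%N -> F b a k P <= c k.
Proof.
elim: k => [|k IH] Hk; first by rewrite F0.
rewrite FS leUx (le_trans (IH (ltnW Hk))) ?H2 //.
by case: (P k) => //; rewrite ?le0x ?H3.
Qed.

Lemma KL k P i : (k <= m)%N -> (i < k)%N -> a i <= F b a k P -> P i.
Proof.
elim: k => [|k IH] // Hk; rewrite ltnS leq_eqVlt => /orP [/eqP Ei|Hi] H.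
  subst i; case: (boolP (P k)) => // Pk.
  move: H; rewrite (FSF _ _ Pk) => H.
  have := H5 Hk; rewrite (le_trans H) //.
  by apply: F_le_c; apply: ltnW.
have Hk' : (k <= m)%N by apply: ltnW.
apply: (IH Hk' Hi).
case: (boolP (P k)) => Pk; last by rewrite -(FSF b a Pk).
have Hc : a i <= c k.
  apply: (le_trans (H3 (ltn_trans Hi Hk))); apply: c_mono => //.
have HF : F b a k P <= c k by apply: F_le_c.
have E := modT (a k) HF.
have : a i <= (F b a k P `|` a k) `&` c k by rewrite lexI -(FST b a Pk) H Hc.
rewrite -E => H'.
apply: (le_trans H'); rewrite leUx lexx /=.
by rewrite (le_trans (H4 Hk)) // le_bF.
Qed.

Lemma Fmeet_aux k P Q : (k < m)%N ->
  (F b a k P `|` a k) `&` F b a k Q = F b a k P `&` F b a k Q.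
Proof.
move=> Hk.
have HX : F b a k P <= c k by apply: F_le_c; apply: ltnW.
have HY : F b a k Q <= c k by apply: F_le_c; apply: ltnW.
have E1 : (F b a k P `|` a k) `&` c k = F b a k P.
  rewrite -(modT (a k) HX); apply/join_idPl.
  by rewrite (le_trans (H4 Hk)) // le_bF.
transitivity ((F b a k P `|` a k) `&` (c k `&` F b a k Q)).
  by rewrite (meet_idPr HY).
by rewrite meetA E1.
Qed.

Lemma Fmeet k P Q : (k <= m)%N ->
  F b a k P `&` F b a k Q = F b a k (predI P Q).
Proof.
elim: k => [|k IH] Hk; first by rewrite !F0 meetxx.
have Hk' : (k <= m)%N by apply: ltnW.
have IHk := IH Hk'.
case: (boolP (P k)) => Pk; case: (boolP (Q k)) => Qk.
- have PQk : predI P Q k by rewrite /= Pk Qk.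
  rewrite (FST _ _ Pk) (FST _ _ Qk) (FST _ _ PQk) -IHk.
  set X := F b a k P; set Y := F b a k Q.
  have E1 : a k `|` (Y `&` (X `|` a k)) = (a k `|` Y) `&` (X `|` a k).
    by apply: modT; apply: leUr.
  have E2 : Y `&` (X `|` a k) = X `&` Y by rewrite meetC Fmeet_aux.
  by rewrite E2 in E1; rewrite [Y `|` a k]joinC meetC -E1 joinC.
- have PQk : ~~ predI P Q k by rewrite /= (negbTE Qk) andbF.
  rewrite (FST _ _ Pk) (FSF _ _ Qk) (FSF _ _ PQk) -IHk.
  exact: Fmeet_aux.
- have PQk : ~~ predI P Q k by rewrite /= (negbTE Pk).
  rewrite (FSF _ _ Pk) (FST _ _ Qk) (FSF _ _ PQk) -IHk.
  by rewrite meetC Fmeet_aux // meetC.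
- have PQk : ~~ predI P Q k by rewrite /= (negbTE Pk).
  by rewrite (FSF _ _ Pk) (FSF _ _ Qk) (FSF _ _ PQk).
Qed.

End Chain.

Lemma cov_dich (x y z : T) : covers x y -> x <= z -> z <= y -> z = x \/ z = y.
Proof.
move=> [xy H] xz zy; case: (eqVneq z y) => [->|zny]; first by right.
have zly : z < y by rewrite lt_neqAle zny zy.
move: xz; rewrite le_eqVlt => /orP [/eqP ->|xlz]; first by left.
by case: (H z).
Qed.

Section Atoms.
Variables (b : T) (a : nat -> T) (m : nat).
Hypothesis Hcov : forall i, (i < m)%N -> covers b (a i).
Hypothesis Hnot : forall i, (i < m)%N -> ~~ (a i <= D b a i).

Lemma DS i : D b a i.+1 = D b a i `|` a i.
Proof. by rewrite /D FST. Qed.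

Lemma Hmeet i : (i < m)%N -> a i `&` D b a i <= b.
Proof.
move=> Hi; have [Hlt _] := Hcov Hi.
have := @cov_dich b (a i) (a i `&` D b a i) (Hcov Hi).
rewrite lexI ltW //= le_bF leIl => /(_ isT isT) [->//|E].
by move: (Hnot Hi); rewrite -E leIr.
Qed.

Lemma two i w : (i < m)%N -> D b a i <= w -> w <= D b a i.+1 ->
  w = D b a i \/ w = D b a i.+1.
Proof.
move=> Hi H1 H2; have [Hlt _] := Hcov Hi.
have bw : b <= w by rewrite (le_trans _ H1) // le_bF.
have := @cov_dich b (a i) (w `&` a i) (Hcov Hi).
rewrite lexI bw ltW //= leIr => /(_ isT isT) [E|E].
  left; have := modT (a i) H1.
  rewrite -DS meetC E (meet_idPr H2) => <-.
  by apply/join_idPl; rewrite /D le_bF.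
right; apply/eqP; rewrite eq_le H2 DS leUx H1 /=.
by rewrite -E leIl.
Qed.

Lemma D_le_Dm k : (k <= m)%N -> D b a k <= D b a m.
Proof. by move=> H; apply: le_Fmono. Qed.

Lemma Compl k : (k <= m)%N -> forall z, b <= z -> z <= D b a k ->
  exists z', [/\ b <= z', z' <= D b a k, z `&` z' = b & z `|` z' = D b a k].
Proof.
elim: k => [|k IH] Hk z bz zD.
  rewrite /D F0 in zD *.
  have zb : z = b by apply/eqP; rewrite eq_le bz zD.
  by exists b; rewrite zb meetxx joinxx lexx.
have Hk' : (k <= m)%N by apply: ltnW.
have bzD : b <= z `&` D b a k by rewrite lexI bz le_bF.
have [z0' [bz0' z0'D mz0 jz0]] := IH Hk' (z `&` D b a k) bzD (leIr _ _).
have DkDk1 : D b a k <= D b a k.+1 by rewrite DS leUl.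
case: (boolP (z <= D b a k)) => zDk.
  have zE : z `&` D b a k = z by apply/meet_idPl.
  rewrite zE in mz0 jz0.
  exists (z0' `|` a k); split.
  - by rewrite lexUl.
  - by rewrite DS leUx (le_trans z0'D) ?leUl // leUr.
  - have E : (z0' `|` a k) `&` D b a k = z0' `|` (a k `&` D b a k).
      by rewrite (modT (a k) z0'D).
    have E2 : z0' `|` (a k `&` D b a k) = z0'.
      by apply/join_idPl; rewrite (le_trans (Hmeet Hk)).
    by rewrite -{1}zE -meetA [D b a k `&` _]meetC E E2.
  - by rewrite joinA jz0 DS.
exists z0'; split => //.
- exact: (le_trans z0'D).
- by rewrite -mz0 -meetA (meet_idPr z0'D).
- have zD' : z `|` D b a k <= D b a k.+1 by rewrite leUx zD.
  have [E|E] := @two k (z `|` D b a k) Hk (leUr _ _) zD'.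
    by move: zDk; rewrite -E leUl.
  apply/eqP; rewrite eq_le leUx zD (le_trans z0'D) //= -E leUx leUl /=.
  by rewrite -jz0 leUx lexUl ?leIl // leUr.
Qed.

Lemma relcompl p q : b <= p -> p < q -> q <= D b a m ->
  exists s, [/\ b < s, s <= q & s `&` p <= b].
Proof.
move=> bp pq qD.
have [z' [bz' z'D mz jz]] := Compl (leqnn m) bp (le_trans (ltW pq) qD).
exists (z' `&` q); split.
- have bs : b <= z' `&` q by rewrite lexI bz' (le_trans bp (ltW pq)).
  rewrite lt_neqAle bs andbT; apply/eqP => E.
  have : p `|` (z' `&` q) = q by rewrite modT ?ltW // jz (meet_idPr qD).
  by rewrite -E (join_idPl bp) => Epq; move: pq; rewrite Epq ltxx.
- exact: leIr.
- by rewrite -mz meetC meetA leIl.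
Qed.

End Atoms.
End Gen.

Definition pb (P : Prop) : bool := if excluded_middle_informative P then true else false.
Lemma pbP (P : Prop) : reflect P (pb P).
Proof. by rewrite /pb; case: excluded_middle_informative => H; constructor. Qed.

Section Height.
Context {d : Order.disp_t} {T : porderType d}.

Definition chainf (f : nat -> T) k := forall i, (i < k)%N -> f i < f i.+1.

Lemma chain_seq f k : chainf f k -> sorted <%O (mkseq f k.+1).
Proof.
move=> H; apply/(sortedP (f 0)) => i; rewrite size_mkseq ltnS => Hi.
by rewrite !nth_mkseq // ?H // ltnS ltnW.
Qed.

Variable N : nat.
Hypothesis HN : length_le T N.

Lemma chainf_bound f k : chainf f k -> (k <= N)%N.
Proof.
move=> /chain_seq H; have := HN H (fun _ _ => I).
by rewrite size_mkseq.
Qed.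

Definition hch x k := exists f, chainf f k /\ f k = x.
Definition h x := (\max_(i < N.+1 | pb (hch x i)) i)%N.

Lemma hch_bound x k : hch x k -> (k <= N)%N.
Proof. by move=> [f [cf _]]; apply: chainf_bound cf. Qed.

Lemma h_ge x k : hch x k -> (k <= h x)%N.
Proof.
move=> H; have Hk : (k < N.+1)%N by rewrite ltnS; apply: hch_bound H.
have := @bigop.leq_bigmax_cond _ (fun i : 'I_N.+1 => pb (hch x i)) (fun i => nat_of_ord i) (Ordinal Hk).
by apply; apply/pbP.
Qed.

Lemma hch0 x : hch x 0.
Proof. by exists (fun _ => x); split. Qed.

Lemma h_at x : hch x (h x).
Proof.
have P0 : pb (hch x (@ord0 N)) by apply/pbP; apply: hch0.
rewrite /h (bigop.bigmax_eq_arg ord0) //.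
by case: arg_maxnP => //= i /pbP.
Qed.

Lemma h_lt x y : x < y -> (h x < h y)%N.
Proof.
move=> xy; have [f [cf fx]] := h_at x.
apply: h_ge; exists (fun i => if i == (h x).+1 then y else f i); split; last by rewrite eqxx.
move=> i Hi; have -> : (i == (h x).+1) = false by apply/eqP; lia.
rewrite eqSS; case: (eqVneq i (h x)) => [->|ne]; first by rewrite fx.
have Hi' : (i < h x)%N by rewrite ltn_neqAle ne -ltnS.
by rewrite cf.
Qed.

Lemma h_le x y : x <= y -> (h x <= h y)%N.
Proof. by rewrite le_eqVlt => /orP [/eqP ->//|/h_lt /ltnW]. Qed.

Lemma h_bound x : (h x <= N)%N.
Proof. exact: hch_bound (h_at x). Qed.

Lemma min_elt (P : T -> Prop) z : P z -> exists w, P w /\ forall v, v < w -> ~ P v.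
Proof.
suff: forall k z, (h z < k)%N -> P z -> exists w, P w /\ forall v, v < w -> ~ P v.
  by move=> H; apply: (H (h z).+1).
elim=> [|k IH] {}z // Hz Pz.
case: (classic (exists v, v < z /\ P v)) => [[v [vz Pv]]|Hn].
  by apply: (IH v) => //; rewrite (leq_trans (h_lt vz)).
by exists z; split => // v vz Pv; apply: Hn; exists v.
Qed.

Lemma max_elt (P : T -> Prop) z : P z -> exists w, P w /\ forall v, w < v -> ~ P v.
Proof.
suff: forall k z, (N - h z < k)%N -> P z -> exists w, P w /\ forall v, w < v -> ~ P v.
  by move=> H; apply: (H (N - h z).+1).
elim=> [|k IH] {}z // Hz Pz.
case: (classic (exists v, z < v /\ P v)) => [[v [vz Pv]]|Hn].
  apply: (IH v) => //; rewrite -ltnS (leq_trans _ Hz) // ltnS.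
  have := h_lt vz; have := h_bound v; lia.
by exists z; split => // v vz Pv; apply: Hn; exists v.
Qed.

End Height.

Lemma a_le_F {d} {T : tbLatticeType d} (b : T) a k (P : pred nat) i :
  (i < k)%N -> P i -> a i <= F b a k P.
Proof.
move=> Hi Pi; apply: lexUr; rewrite /J.
by apply: (joins_min (j := Ordinal Hi)).
Qed.

Definition inS k (A : {set 'I_k.+1}) : pred nat := fun i => (i < k.+1)%N && (inord i \in A).

Lemma OE {d d'} (L : tbLatticeType d') (M : tbLatticeType d) (modL : modular L)
  (g : L -> M) (Hg : forall u v, g u <= g v <-> u <= v) n (b : L) a c k :
  b <= c 0 ->
  (forall i, (i < k.+1)%N -> c i <= c i.+1) ->
  (forall i, (i < k.+1)%N -> a i <= c i.+1) ->
  (forall i, (i < k.+1)%N -> a i `&` c i <= b) ->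
  (forall i, (i < k.+1)%N -> ~~ (a i <= c i)) ->
  breadth_le M n -> (k.+1 <= n)%N.
Proof.
move=> H1 H2 H3 H4 H5 Hb.
apply: (Hb k.+1 (fun A => g (F b a k.+1 (inS A)))) => A B; split.
- move=> /Hg HF; apply/subsetP => j jA.
  have Hj : (j < k.+1)%N := ltn_ord j.
  have ajF : a j <= F b a k.+1 (inS B).
    apply: le_trans HF; apply: a_le_F => //; by rewrite /inS Hj inord_val.
  have := KL modL H1 H2 H3 H4 H5 (leqnn _) Hj ajF.
  by rewrite /inS inord_val => /andP [].
- move=> /subsetP AB; apply/Hg; apply: le_F => i /andP [Hi iA].
  by rewrite /inS Hi AB.
Qed.

Section Main.
Context {d : Order.disp_t} {M : tbLatticeType d}.
Hypothesis modM : modular M.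
Variable N : nat.
Hypothesis HN : length_le M N.

Lemma exists_cover (x : M) : x != \top -> exists w, covers x w.
Proof.
move=> xt; have xlt : x < \top by rewrite lt_neqAle xt lex1.
have [w [xw Hw]] := min_elt HN (P := fun w => x < w) xlt.
exists w; split => // c [xc cw]; exact: Hw cw xc.
Qed.

Lemma atom_below (b s : M) : b < s -> exists w, covers b w /\ w <= s.
Proof.
move=> bs.
have [w [[bw ws] Hw]] := min_elt HN (P := fun w => b < w /\ w <= s) (conj bs (lexx s)).
exists w; split => //; split => // c [bc cw]; apply: (Hw c cw); split => //.
exact: le_trans (ltW cw) ws.
Qed.

Section AtomSeq.
Variables (b : M) (a : nat -> M) (m : nat).
Hypothesis Hcov : forall i, (i < m)%N -> covers b (a i).
Hypothesis Hnot : forall i, (i < m)%N -> ~~ (a i <= D b a i).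

Lemma atomistic_D : atomistic b (D b a m).
Proof.
move=> c bc cD.
exists (fun x => atom_of b (D b a m) x /\ x <= c); split; first by move=> x [].
split => //; split => //; split; first by move=> x [].
move=> u bu uD Hu; case: (boolP (c <= u)) => // ncu; exfalso.
have p_lt : c `&` u < c by rewrite lt_neqAle leIl andbT; apply: contra ncu => /eqP <-; exact: leIr.
have bp : b <= c `&` u by rewrite lexI bc bu.
have [s [bs sc sp]] := relcompl modM Hcov Hnot bp p_lt cD.
have [w [cw ws]] := atom_below bs.
have wc : w <= c := le_trans ws sc.
have wu : w <= u by apply: Hu; split => //; split => //; exact: le_trans wc cD.
have : w <= b by apply: le_trans sp; rewrite lexI ws lexI wc wu.
by move=> wb; case: cw => bw _; have := lt_le_trans bw wb; rewrite ltxx.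
Qed.

End AtomSeq.

Lemma D_ext (b : M) a a' k : (forall i, (i < k)%N -> a i = a' i) -> D b a k = D b a' k.
Proof.
move=> H; rewrite /D /F /J; congr (_ `|` _); apply: eq_bigr => i _; apply: H; exact: ltn_ord.
Qed.

Lemma greedy (x : M) : exists j a, [/\ (forall i, (i < j)%N -> covers x (a i)),
  (forall i, (i < j)%N -> ~~ (a i <= D x a i)) &
  (forall z, covers x z -> z <= D x a j)].
Proof.
suff: forall k j a, (N - h N (D x a j) < k)%N ->
  (forall i, (i < j)%N -> covers x (a i)) ->
  (forall i, (i < j)%N -> ~~ (a i <= D x a i)) ->
  exists j a, [/\ (forall i, (i < j)%N -> covers x (a i)),
  (forall i, (i < j)%N -> ~~ (a i <= D x a i)) &
  (forall z, covers x z -> z <= D x a j)].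
  move=> H; apply: (H (N - h N (D x (fun _ => x) 0)).+1 0 (fun _ => x)) => //.
elim=> [|k IH] j a // Hk Hc Hn.
case: (classic (exists z, covers x z /\ ~ (z <= D x a j))) => [[z [cz nz]]|Hno]; last first.
  exists j, a; split => // z cz; apply: NNPP => nz; apply: Hno; by exists z.
set a' := fun i => if i == j then z else a i.
have Ea : forall l, (l <= j)%N -> D x a' l = D x a l.
  move=> l Hl; apply/esym/D_ext => i Hi; rewrite /a'.
  by have -> : (i == j) = false by apply/eqP; lia.
have Hlt : D x a j < D x a' j.+1.
  rewrite (DS _ a' j) (Ea _ (leqnn j)) lt_neqAle leUl andbT /a' eqxx.
  by apply: contraNneq (introN idP nz) => ->; rewrite leUr.
apply: (IH j.+1 a').
- have := h_lt HN Hlt; have := h_bound HN (D x a' j.+1); move: Hk.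
  move: (h N (D x a j)) (h N (D x a' j.+1)) => u v; lia.
- move=> i; rewrite ltnS leq_eqVlt => /orP [/eqP ->|Hi]; first by rewrite /a' eqxx.
  by rewrite /a' (ltn_eqF Hi); apply: Hc.
- move=> i; rewrite ltnS leq_eqVlt => /orP [/eqP ->|Hi].
    by rewrite /a' eqxx Ea //; exact/negP.
  by rewrite /a' (ltn_eqF Hi) Ea ?Hn // ltnW.
Qed.



Lemma D_lub (x : M) j a : (forall i, (i < j)%N -> covers x (a i)) ->
  (forall z, covers x z -> z <= D x a j) -> x != \top -> is_lub (covers x) (D x a j).
Proof.
move=> Hc Hall xt; split => // u Hu.
have [w cw] := exists_cover xt.
rewrite /D /F leUx (le_trans (ltW cw.1) (Hu _ cw)) /=.
by apply/joinsP => i _; apply: Hu; apply: Hc.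
Qed.

Lemma lub_unique (P : M -> Prop) s t : is_lub P s -> is_lub P t -> s = t.
Proof.
move=> [s1 s2] [t1 t2]; apply/eqP; rewrite eq_le s2 // t2 //.
Qed.

Lemma i_iii n : breadth_le M n -> forall x s : M, star_of x s -> interval_length_le x s n.
Proof.
move=> Hb x s [Htop Hl] l Hsort Hin.
case: (eqVneq x \top) => [xt|xnt].
  have st := Htop xt.
  case: l Hsort Hin => [|z1 [|z2 l]] //= Hsort Hin.
  have E : forall z, z \in [:: z1, z2 & l] -> z = \top.
    by move=> z zi; have [xz zs] := Hin z zi; apply/eqP; rewrite eq_le lex1 -xt xz.
  move: Hsort => /andP [z12 _].
  have e1 : z1 = \top by apply: E; rewrite inE eqxx.
  have e2 : z2 = \top by apply: E; rewrite !inE eqxx orbT.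
  by rewrite e1 e2 ltxx in z12.
have [j [a0 [Hc Hn Hall]]] := greedy x.
have xnt' : x <> \top by apply/eqP.
have sE : s = D x a0 j := lub_unique (Hl xnt') (D_lub Hc Hall xnt).
subst s.
case El : (size l) => [//|[//|k]].
set c := fun t => nth x l t.
have Hcc : forall t, (t < k.+1)%N -> c t < c t.+1.
  by move=> t Ht; apply: (sortedP x Hsort); rewrite El ltnS.
have Hin' : forall t, (t < k.+2)%N -> x <= c t /\ c t <= D x a0 j.
  by move=> t Ht; apply: Hin; apply: mem_nth; rewrite El.
have Ex : forall t, (t < k.+1)%N -> exists w, covers x w /\ w <= c t.+1 /\ ~~ (w <= c t).
  move=> t Ht.
  have [xct _] := Hin' t (ltnW Ht).
  have [_ ctD] := Hin' t.+1 Ht.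
  have [s' [xs s'q s'p]] := relcompl modM Hc Hn xct (Hcc t Ht) ctD.
  have [w [cw ws]] := atom_below xs.
  exists w; split => //; split; first exact: le_trans ws s'q.
  apply/negP => wp; have : w <= x by apply: le_trans s'p; rewrite lexI ws wp.
  by move=> wx; case: cw => xw _; have := lt_le_trans xw wx; rewrite ltxx.
pose a' := fun t => epsilon (inhabits x) (fun w => covers x w /\ w <= c t.+1 /\ ~~ (w <= c t)).
have Ha' : forall t, (t < k.+1)%N -> covers x (a' t) /\ a' t <= c t.+1 /\ ~~ (a' t <= c t).
  by move=> t Ht; exact: (epsilon_spec (inhabits x) _ (Ex t Ht)).
rewrite ltnS; apply: (@OE _ _ M M modM id (fun u v => iff_refl _) n x a' c k) => //.
- by have [] := Hin' 0 isT.
- by move=> t Ht; apply: ltW; apply: Hcc.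
- by move=> t Ht; have [_ []] := Ha' t Ht.
- move=> t Ht; have [cov [_ nle]] := Ha' t Ht.
  have [xc _] := Hin' t (ltnW Ht).
  have := @cov_dich _ _ x (a' t) (a' t `&` c t) cov.
  rewrite lexI (ltW cov.1) xc leIl => /(_ isT isT) [->//|E].
  by move: nle; rewrite -E leIr.
- by move=> t Ht; have [_ []] := Ha' t Ht.
Qed.

Section Tuple.
Variable m : nat.
Definition Yf (y : nat -> M) i := \join_(j < m | (j : nat) != i) y j.
Definition Irr y := forall i, (i < m)%N -> ~~ (y i <= Yf y i).
Definition Good y := Irr y /\ forall i, (i < m)%N -> forall z, z < y i -> z <= Yf y i.

Lemma Yf_mono (y y' : nat -> M) i : (forall j, y' j <= y j) -> Yf y' i <= Yf y i.
Proof.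
move=> H; apply/joinsP => j Hj; apply: le_trans (H j) _.
exact: (joins_min (j := j)).
Qed.

Lemma y_le_Yf (y : nat -> M) i j : (j < m)%N -> j != i -> y j <= Yf y i.
Proof. by move=> Hj ne; exact: (joins_min (j := Ordinal Hj)). Qed.

Lemma minimize y : Irr y -> exists y', Good y'.
Proof.
suff: forall k (y : nat -> M), (\sum_(i < m) h N (y i) < k)%N -> Irr y -> exists y', Good y'.
  by move=> H; apply: (H _ y (ltnSn _)).
elim=> [|k IH] {}y // Hk Hy.
case: (classic (exists i z, [/\ (i < m)%N, z < y i & ~ z <= Yf y i])) => [[i [z [Hi zy nz]]]|Hno];
  last first.
  exists y; split => // i Hi z zy; apply: NNPP => nz; apply: Hno; by exists i, z.
set y' := fun j => if j == i then z else y j.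
have Hle : forall j, y' j <= y j.
  by move=> j; rewrite /y'; case: eqP => [->|_]; [exact: ltW|].
have Yi : Yf y' i = Yf y i.
  by apply: eq_bigr => j /negbTE Hj; rewrite /y' Hj.
apply: (IH y').
- have E1 : (\sum_(j < m) h N (y j) = h N (y i) + \sum_(j < m | j != Ordinal Hi) h N (y j))%N.
    by rewrite (bigD1 (Ordinal Hi)).
  have E2 : (\sum_(j < m) h N (y' j) = h N z + \sum_(j < m | j != Ordinal Hi) h N (y j))%N.
    rewrite (bigD1 (Ordinal Hi)) //= {1}/y' eqxx; congr (_ + _)%N.
    apply: eq_bigr => j Hj; rewrite /y'.
    by have -> : (j == i :> nat) = false by apply/negbTE; move: Hj; apply: contra => /eqP E; apply/eqP/val_inj.
  rewrite E2; move: Hk; rewrite E1; have := h_lt HN zy.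
  move: (h N z) (h N (y i)) (\sum_(j < m | j != Ordinal Hi) h N (y j)) => u v w; lia.
- move=> j Hj; case: (eqVneq j i) => [->|ne].
    by rewrite Yi /y' eqxx; apply/negP.
  rewrite /y' (negbTE ne); apply: contra (Hy j Hj) => H.
  exact: le_trans H (Yf_mono j Hle).
Qed.

Lemma good_atoms y : Good y -> exists (b : M) (a : nat -> M), (forall i, (i < m)%N -> covers b (a i)) /\
   (forall i, (i < m)%N -> ~~ (a i <= D b a i)).
Proof.
move=> [Hirr Hg].
set b := \join_(i < m) (y i `&` Yf y i).
have bY : forall i, (i < m)%N -> b <= Yf y i.
  move=> i Hi; apply/joinsP => j _; case: (eqVneq (j : nat) i) => [<-|ne].
    exact: leIr.
  by apply: le_trans (leIl _ _) _; apply: y_le_Yf.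
exists b, (fun i => b `|` y i); split.
- move=> i Hi /=; split.
    rewrite lt_neqAle leUl andbT; apply/negP => /eqP E.
    by move: (Hirr i Hi); rewrite (le_trans _ (bY i Hi)) // E leUr.
  move=> z [bz za]; rewrite /= in za.
  case: (boolP (y i <= z)) => yz.
    have H : b `|` y i <= z by rewrite leUx (ltW bz) yz.
    by have := lt_le_trans za H; rewrite ltxx.
  have t_lt : z `&` y i < y i.
    by rewrite lt_neqAle leIr andbT; apply: contra yz => /eqP <-; exact: leIl.
  have tb : z `&` y i <= b.
    have := Hg i Hi _ t_lt => H.
    apply: (le_trans _ (joins_min (j := Ordinal Hi) isT (lexx _))) => /=.
    by rewrite lexI leIr H.
  have := modM (y i) (ltW bz).
  rewrite meetC (join_idPl tb) (meet_idPr (ltW za)) => E.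
  by move: bz; rewrite E ltxx.
- move=> i Hi; apply/negP => H.
  have HD : D b (fun i => b `|` y i) i <= Yf y i.
    rewrite /D /F leUx bY //=; apply/joinsP => j _.
    rewrite leUx bY //= y_le_Yf //; first exact: ltn_trans (ltn_ord j) Hi.
    by rewrite neq_ltn ltn_ord.
  by move: (Hirr i Hi); rewrite (le_trans (le_trans (leUr _ _) H) HD).
Qed.

End Tuple.

Lemma embed_atoms m (phi : {set 'I_m} -> M) :
  (forall A B, phi A <= phi B <-> A \subset B) -> (0 < m)%N ->
  exists (b : M) (a : nat -> M), (forall i, (i < m)%N -> covers b (a i)) /\
   (forall i, (i < m)%N -> ~~ (a i <= D b a i)).
Proof.
case: m phi => [|m] phi Hphi // _.
set y := fun i : nat => phi [set (inord i : 'I_m.+1)].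
have : Irr m.+1 y.
  move=> i Hi; apply/negP => H.
  have HY : Yf m.+1 y i <= phi (~: [set inord i]).
    apply/joinsP => j Hj; apply/Hphi; apply/subsetP => x; rewrite !inE => /eqP ->.
    apply: contra Hj => /eqP E; apply/eqP.
    by have := congr1 val E; rewrite /= !inordK.
  have := proj1 (Hphi _ _) (le_trans H HY) => /subsetP /(_ (inord i)).
  by rewrite !inE eqxx => /(_ isT).
move=> /minimize [y' Hy']; exact: good_atoms Hy'.
Qed.

Lemma notB_atoms n : ~ breadth_le M n -> exists m (b : M) (a : nat -> M), [/\ (n < m)%N,
   (forall i, (i < m)%N -> covers b (a i)) &
   (forall i, (i < m)%N -> ~~ (a i <= D b a i))].
Proof.
move=> HnB; apply: NNPP => Hno; apply: HnB => m phi Hphi.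
case: (leqP m n) => // nm; exfalso.
have [b [a [Hc Hn]]] := embed_atoms Hphi (leq_ltn_trans (leq0n _) nm).
by apply: Hno; exists m, b, a.
Qed.

Lemma max_interval (b e0 : M) : b <= e0 -> atomistic b e0 ->
  exists c e, [/\ c <= b, e0 <= e & max_atomistic c e].
Proof.
move=> be0 ate0.
suff: forall k (c e : M), (N + N - (h N e + (N - h N c)) < k)%N -> c <= e -> atomistic c e ->
   c <= b -> e0 <= e -> exists c e, [/\ c <= b, e0 <= e & max_atomistic c e].
  by move=> H; apply: (H _ b e0 (ltnSn _)).
elim=> [|k IH] c e // Hk ce atc cb e0e.
case: (classic (exists c' e', [/\ c' <= e', c' <= c, e <= e', atomistic c' e' & ~ (c' = c /\ e' = e)]))
  => [[c' [e' [c'e' c'c ee' atc' ne]]]|Hno]; last first.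
  exists c, e; split => //; split => //; split => // c' e' c'e' c'c ee' atc'.
  apply: NNPP => ne; apply: Hno; by exists c', e'.
apply: (IH c' e') => //; [|exact: le_trans c'c cb|exact: le_trans e0e ee'].
have hc := h_le HN c'c; have he := h_le HN ee'.
have hb1 := h_bound HN c; have hb2 := h_bound HN e; have hb3 := h_bound HN c'; have hb4 := h_bound HN e'.
case: (eqVneq c' c) => [Ec|nc].
  have Ee : e != e' by apply/eqP => Ee; apply: ne; split.
  have ht : (h N e < h N e')%N by apply: (h_lt HN); rewrite lt_neqAle Ee ee'.
  move: Hk ht hc he hb1 hb2 hb3 hb4.
  move: (h N c) (h N e) (h N c') (h N e') => u v w x; lia.
have ht : (h N c' < h N c)%N by apply: (h_lt HN); rewrite lt_neqAle nc c'c.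
move: Hk ht hc he hb1 hb2 hb3 hb4.
move: (h N c) (h N e) (h N c') (h N e') => u v w x; lia.
Qed.

Lemma iii_i n : (forall x : M, skeleton x -> forall s : M, star_of x s -> interval_length_le x s n) ->
  breadth_le M n.
Proof.
move=> H3; apply: NNPP => HnB.
have [m [b [a [nm Hc Hn]]]] := notB_atoms HnB.
have m0 : (0 < m)%N by apply: leq_ltn_trans (leq0n _) nm.
have [c [e [cb De [ce [atc maxc]]]]] := max_interval (le_bF _ _ _ _) (atomistic_D Hc Hn).
have cnt : c != \top.
  apply/eqP => ct; have [ba _] := Hc 0 m0.
  by have := lt_le_trans ba (lex1 (a 0)); rewrite -ct => /(le_lt_trans cb); rewrite ltxx.
have [j [a2 [Hc2 Hn2 Hall2]]] := greedy c.
have cnt' : c <> \top by apply/eqP.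
have Hstar : star_of c (D c a2 j) by split => // _; apply: D_lub.
have Hsk : skeleton c by exists e; split.
have [w cw] := exists_cover cnt.
have cs : c <= D c a2 j := le_trans (ltW cw.1) (Hall2 _ cw).
have es : e <= D c a2 j.
  have [S [HS [_ [_ [_ Hmin]]]]] := atc e ce (lexx e).
  have : e <= e `&` D c a2 j.
    apply: Hmin; first by rewrite lexI ce cs.
      exact: leIl.
    by move=> x Sx; have [cx xe] := HS x Sx; rewrite lexI xe Hall2.
  by move=> H; apply: le_trans H (leIr _ _).
have HH := H3 c Hsk _ Hstar (mkseq (D b a) m.+1).
have Hs : sorted <%O (mkseq (D b a) m.+1).
  apply: chain_seq => i Hi; rewrite DS lt_neqAle leUl andbT.
  by apply: contra (Hn i Hi) => /eqP ->; exact: leUr.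
have Hm : forall x, x \in mkseq (D b a) m.+1 -> c <= x /\ x <= D c a2 j.
  move=> z /mapP [i]; rewrite mem_iota add0n => /andP [_ Hi] ->; split.
    exact: le_trans cb (le_bF _ _ _ _).
  apply: le_trans es; apply: le_trans De; exact: le_Fmono.
by have := HH Hs Hm; rewrite size_mkseq ltnS leqNgt nm.
Qed.

End Main.

Lemma Fjoin {d} {T : tbLatticeType d} (b : T) a k (P Q : pred nat) :
  F b a k P `|` F b a k Q = F b a k (predU P Q).
Proof.
elim: k => [|k IH]; first by rewrite !F0 joinxx.
rewrite !FS joinACA IH; congr (_ `|` _) => /=.
by case: (P k); case: (Q k); rewrite ?joinxx ?joinx0 ?join0x.
Qed.

Section Part2.
Import Order.SetSubsetOrder.
Notation BL n := (Order.SetSubsetOrder.type Order.SetSubsetOrder.subset_display 'I_n.+1).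

Lemma BL_modular n : modular (BL n).
Proof.
move=> A B C; rewrite leEsubset => AC.
rewrite !meetEsubset !joinEsubset setUIr.
by rewrite (setUidPr AC).
Qed.

Lemma BL_compl n : complemented (BL n).
Proof.
move=> A; exists (~: A); rewrite meetEsubset joinEsubset botEsubset topEsubset.
by rewrite setICr setUCr.
Qed.

Lemma BL_length n : has_length (BL n) n.+1.
Proof.
split.
  move=> s Hs _.
  have Hc : sorted ltn (map (fun A : BL n => #|A|) s).
    rewrite sorted_map; apply: sub_sorted Hs => A B.
    rewrite /= lt_neqAle leEsubset => /andP [ne AB]; apply: proper_card.
    by rewrite properEneq ne AB.
  have := uniq_leq_size (sorted_uniq ltn_trans ltnn Hc) (s2 := iota 0 n.+2).
  rewrite size_map size_iota; apply => x /mapP [A _ ->]; rewrite mem_iota add0n ltnS.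
  by apply: leq_trans (max_card _) _; rewrite card_ord.
exists (mkseq (fun k => [set j : 'I_n.+1 | (j < k)%N] : BL n) n.+2); split; last by rewrite size_mkseq.
apply: chain_seq => k Hk; rewrite lt_neqAle leEsubset; apply/andP; split.
  apply/eqP => /setP /(_ (inord k)); rewrite !inE inordK // ltnn ltnSn //.
apply/subsetP => j; rewrite !inE => /ltnW; exact.
Qed.

End Part2.

Section Part3.
Import Order.SetSubsetOrder.
Notation BL n := (Order.SetSubsetOrder.type Order.SetSubsetOrder.subset_display 'I_n.+1).
Context {d : Order.disp_t} {M : tbLatticeType d}.
Hypothesis modM : modular M.
Variable N : nat.
Hypothesis HN : length_le M N.

Lemma ii_i n : ~ (exists (d' : Order.disp_t) (L : tbLatticeType d') (f : L -> M),
          modular L /\ complemented L /\ has_length L n.+1 /\ lattice_embedding f) ->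
  breadth_le M n.
Proof.
move=> Hno; apply: NNPP => HnB.
have [m [b [a [nm Hc Hn]]]] := notB_atoms modM HN HnB.
apply: Hno.
have Hm' : forall i, (i < n.+1)%N -> (i < m)%N by move=> i Hi; apply: leq_trans Hi nm.
have H1 : b <= D b a 0 by apply: le_bF.
have H2 : forall i, (i < n.+1)%N -> D b a i <= D b a i.+1 by move=> i _; rewrite DS leUl.
have H3 : forall i, (i < n.+1)%N -> a i <= D b a i.+1 by move=> i _; rewrite DS leUr.
have H4 : forall i, (i < n.+1)%N -> a i `&` D b a i <= b.
  by move=> i Hi; apply: (Hmeet Hc Hn (Hm' _ Hi)).
have H5 : forall i, (i < n.+1)%N -> ~~ (a i <= D b a i) by move=> i Hi; apply: Hn; apply: Hm'.
have Hle : forall A B : BL n, F b a n.+1 (inS A) <= F b a n.+1 (inS B) -> A \subset B.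
  move=> A B HF; apply/subsetP => j jA.
  have Hj : (j < n.+1)%N := ltn_ord j.
  have ajF : a j <= F b a n.+1 (inS B).
    apply: le_trans HF; apply: a_le_F => //; by rewrite /inS Hj inord_val.
  have := KL modM H1 H2 H3 H4 H5 (leqnn _) Hj ajF.
  by rewrite /inS inord_val => /andP [].
exists subset_display, (BL n), (fun A : BL n => F b a n.+1 (inS A)).
split; first exact: BL_modular.
split; first exact: BL_compl.
split; first exact: BL_length.
split.
  move=> A B E; apply/eqP; rewrite eqEsubset; apply/andP; split; apply: Hle; by rewrite E.
split => A B.
  rewrite meetEsubset (Fmeet modM H1 H2 H3 H4) //; apply: eq_F => i.
  by rewrite /inS /= in_setI; case: (i < n.+1)%N.
rewrite joinEsubset Fjoin; apply: eq_F => i.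
by rewrite /inS /= in_setU; case: (i < n.+1)%N.
Qed.

Lemma i_ii n : breadth_le M n -> ~ (exists (d' : Order.disp_t) (L : tbLatticeType d') (f : L -> M),
          modular L /\ complemented L /\ has_length L n.+1 /\ lattice_embedding f).
Proof.
move=> Hb [d' [L [f [modL [cL [[_ [s [Hs Hsz]]] [finj [fI fU]]]]]]]].
have Hg : forall u v, f u <= f v <-> u <= v.
  move=> u v; split => H.
    have E : f (u `&` v) = f u by rewrite fI; apply/meet_idPl.
    by apply/meet_idPl; apply: finj.
  by apply/join_idPr; rewrite -fU; congr f; apply/join_idPr.
set c := fun t => nth \bot s t.
pose yc := fun t => epsilon (inhabits (\bot : L)) (fun y => c t `&` y = \bot /\ c t `|` y = \top).
have Hyc : forall t, c t `&` yc t = \bot /\ c t `|` yc t = \top.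
  by move=> t; exact: (epsilon_spec (inhabits \bot) _ (cL (c t))).
pose a := fun t => yc t `&` c t.+1.
have Hcc : forall t, (t < n.+1)%N -> c t < c t.+1.
  by move=> t Ht; apply: (sortedP \bot Hs); rewrite Hsz ltnS.
suff: (n.+1 <= n)%N by rewrite ltnn.
apply: (@OE _ _ L M modL f Hg n \bot a c n (le0x _)) => //.
- by move=> t Ht; apply: ltW; apply: Hcc.
- by move=> t Ht; exact: leIr.
- move=> t Ht; rewrite /a -meetA [c t.+1 `&` _]meetC meetA [yc t `&` _]meetC (Hyc t).1.
  exact: leIl.
- move=> t Ht; apply/negP => H.
  have E := modL (c t) (yc t) (c t.+1) (ltW (Hcc t Ht)).
  rewrite (Hyc t).2 meet1x in E.
  have : c t.+1 <= c t by rewrite -E leUx lexx H.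
  by have := Hcc t Ht => /lt_le_trans X /X; rewrite ltxx.
Qed.

End Part3.

Unset Implicit Arguments.
Theorem mainTheorem16 (d : Order.disp_t) (M : tbLatticeType d) (n : nat) :
  modular M -> finite_length M -> (1 <= n)%N ->
  (breadth_le M n <->
     ~ (exists (d' : Order.disp_t) (L : tbLatticeType d') (f : L -> M),
          modular L /\ complemented L /\ has_length L n.+1 /\ lattice_embedding f))
  /\
  (breadth_le M n <->
     forall x : M, skeleton x -> forall s : M, star_of x s -> interval_length_le x s n).
Proof.
move=> modM [N HN] _; split; split.
- exact: i_ii.
- exact: ii_i modM N HN n.
- by move=> Hb x _ s Hs; exact: i_iii modM N HN n Hb x s Hs.
- exact: iii_i modM N HN n.
Qed.
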